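(* Let $(\bm{W}_0,\bm{D}_0,f_{0,j}:j=1,\ldots,p)$ and $(\bm{W}_1,\bm{D}_1,f_{1,j}:j=1,\ldots,p)$ be two parameter values of the model in the context that lead to the same distribution of $(\bm{Y}_t:t=1,\ldots,T)$ for every $T=1,2,\ldots$, where all diagonal entries of $\bm{W}_1$ are zero and $\bm{W}_0$ is strictly lower triangular. If, for each $k=0,1$, the set of functions $\{f_{k,j}:j=1,\ldots,p\}$ is linearly independent, then $\bm{W}_0=\bm{W}_1$, $\bm{D}_0=\bm{D}_1$, and $f_{0,j}=f_{1,j}$ for all $j=1,\ldots,p$.
   Context: Model: a $p$-dimensional time series $(\bm{Y}_t)$ satisfies $\bm{Y}_t-\bm{W}\bm{Y}_t=\bm{D}^{1/2}\bm{Z}_t$, where $\bm{W}$ is a $p\times p$ matrix with $\bm{I}-\bm{W}$ invertible, $\bm{D}$ is a diagonal matrix with positive diagonal entries, and $(\bm{Z}_t)$ is a zero-mean stationary Gaussian process whose $p$ components are mutually independent univariate stationary series with unit variance and continuous spectral densities $f_1,\ldots,f_p$ on $[-\pi,\pi]$, where $f_j(\omega)=\gamma_j(0)+2\sum_{h\ge1}\gamma_j(h)\cos(h\omega)$ with $\gamma_j$ the autocovariance function of the $j$th component. *)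

(* Defs.v *)
From HB Require Import structures.
From mathcomp Require Import all_boot all_order all_algebra.
From mathcomp Require Import all_classical all_reals all_analysis.
Set Implicit Arguments. Unset Strict Implicit. Unset Printing Implicit Defensive.
Import Order.TTheory GRing.Theory Num.Theory.
Import numFieldNormedType.Exports.
Local Open Scope classical_set_scope.
Local Open Scope ring_scope.

Section Model.
Variables (R : realType) (p : nat).

Definition lag (s t : nat) : nat := (maxn s t - minn s t)%N.

(* g is the autocovariance function (at lags h >= 0) of a univariate
   stationary series with unit variance *)
Definition is_unit_autocov (g : nat -> R) : Prop :=
  g 0%N = 1 /\
  forall (n : nat) (c : 'I_n -> R),
    0 <= \sum_(s < n) \sum_(t < n) c s * c t * g (lag s t).

Definition is_cont_specdens (g : nat -> R) (f : R -> R) : Prop :=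
  (forall w : R, - pi <= w <= pi ->
     (fun n : nat => g 0%N + 2 * \sum_(1 <= h < n.+1) g h * cos (h%:R * w))
       @ \oo --> f w) /\
  {within `[- pi, pi], continuous f}.

(* Parameter (W, D = diag d, f_j) of the model, with autocovariances g_j of
   the components of Z. *)
Definition model_param (W : 'M[R]_p) (d : 'rV[R]_p)
    (g : 'I_p -> nat -> R) (f : 'I_p -> R -> R) : Prop :=
  (1%:M - W) \in unitmx /\
  (forall i, 0 < d 0 i) /\
  (forall j, is_unit_autocov (g j) /\ is_cont_specdens (g j) (f j)).

(* Cov(Y_s, Y_t) where Y_t = (I - W)^{-1} D^{1/2} Z_t and
   Cov(Z_s, Z_t) = diag(g_j(|s-t|)). *)
Definition covY (W : 'M[R]_p) (d : 'rV[R]_p) (g : 'I_p -> nat -> R)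
    (h : nat) : 'M[R]_p :=
  let A := invmx (1%:M - W) *m diag_mx (map_mx Num.sqrt d) in
  A *m diag_mx (\row_j g j h) *m A^T.

(* (Y_1, ..., Y_T) is zero-mean Gaussian, so its law is determined by (and
   determines) the block covariance matrix (Cov(Y_s,Y_t))_{s,t<T}. *)
Definition same_law_Y (W0 : 'M[R]_p) (d0 : 'rV[R]_p) (g0 : 'I_p -> nat -> R)
    (W1 : 'M[R]_p) (d1 : 'rV[R]_p) (g1 : 'I_p -> nat -> R) : Prop :=
  forall (T : nat) (s t : 'I_T),
    covY W0 d0 g0 (lag s t) = covY W1 d1 g1 (lag s t).

Definition strictly_lower (W : 'M[R]_p) : Prop :=
  forall i j : 'I_p, (i <= j)%N -> W i j = 0.

Definition zero_diag (W : 'M[R]_p) : Prop := forall i : 'I_p, W i i = 0.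

Definition lin_indep_on_circle (f : 'I_p -> R -> R) : Prop :=
  forall a : 'I_p -> R,
    (forall w : R, - pi <= w <= pi -> \sum_(j < p) a j * f j w = 0) ->
    forall j, a j = 0.

End Model.

(* Main.v *)
Require Import Defs.
From HB Require Import structures.
From mathcomp Require Import all_boot all_order all_algebra.
From mathcomp Require Import all_classical all_reals all_analysis.
Import Order.TTheory GRing.Theory Num.Theory.
Import numFieldNormedType.Exports.
Local Open Scope classical_set_scope.

Local Open Scope ring_scope.

Lemma gindep (R : realType) (p : nat) (g : 'I_p -> nat -> R) (f : 'I_p -> R -> R) :
  (forall j, is_cont_specdens (g j) (f j)) -> lin_indep_on_circle f ->
  forall c : 'I_p -> R, (forall h, \sum_j c j * g j h = 0) -> forall j, c j = 0.
Proof.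
move=> Hs Hli c Hc; apply: Hli => w Hw.
have cv : (fun n : nat => \sum_j c j * (g j 0%N + 2 * \sum_(1 <= h < n.+1) g j h * cos (h%:R * w)))
   @ \oo --> \sum_j c j * f j w.
  apply: (@cvg_big _ _ +%R 0 xpredT) => //.
    exact: add_continuous.
  move=> j _; apply: cvgM; first exact: cvg_cst.
  by case: (Hs j) => /(_ w Hw) H _.
have E : (fun n : nat => \sum_j c j * (g j 0%N + 2 * \sum_(1 <= h < n.+1) g j h * cos (h%:R * w)))
   = fun=> 0.
  apply: funext => n.
  under eq_bigr do rewrite mulrDr mulrCA mulr_sumr.
  rewrite big_split /= Hc add0r -mulr_sumr exchange_big /= big1 ?mulr0 // => h _.
  under eq_bigr do rewrite mulrA.
  by rewrite -mulr_suml Hc mul0r.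
rewrite E in cv.
have C0 : (fun=> (0:R)) @ \oo --> (0:R) by apply: cvg_cst.
have := cvg_unique _ cv C0. by apply. 
Qed.

Section M.
Variables (R : realType) (p : nat).

Definition Am (W : 'M[R]_p) (d : 'rV[R]_p) :=
  invmx (1%:M - W) *m diag_mx (map_mx Num.sqrt d).
Definition Bm (W : 'M[R]_p) (d : 'rV[R]_p) :=
  diag_mx (map_mx (fun x => (Num.sqrt x)^-1) d) *m (1%:M - W).

Lemma diag_inv (d : 'rV[R]_p) : (forall i, 0 < d 0 i) ->
  diag_mx (map_mx (fun x => (Num.sqrt x)^-1) d) *m diag_mx (map_mx Num.sqrt d) = 1%:M.
Proof.
move=> Hd; apply/matrixP => i j; rewrite mul_diag_mx !mxE.
case: (eqVneq i j) => [->|nij]; last by rewrite mulr0n mulr0.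
by rewrite !mulr1n mulVf // gt_eqF // sqrtr_gt0.
Qed.

Lemma diag_inv' (d : 'rV[R]_p) : (forall i, 0 < d 0 i) ->
  diag_mx (map_mx Num.sqrt d) *m diag_mx (map_mx (fun x => (Num.sqrt x)^-1) d) = 1%:M.
Proof.
move=> Hd; apply/matrixP => i j; rewrite mul_diag_mx !mxE.
case: (eqVneq i j) => [->|nij]; last by rewrite mulr0n mulr0.
by rewrite !mulr1n mulfV // gt_eqF // sqrtr_gt0.
Qed.

Lemma BA (W : 'M[R]_p) (d : 'rV[R]_p) : (1%:M - W) \in unitmx -> (forall i, 0 < d 0 i) -> Bm W d *m Am W d = 1%:M.
Proof.
move=> U Hd; rewrite /Bm /Am mulmxA -(mulmxA _ (1%:M - W)) mulmxV //.
by rewrite mulmx1 diag_inv.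
Qed.

Lemma AB (W : 'M[R]_p) (d : 'rV[R]_p) : (1%:M - W) \in unitmx -> (forall i, 0 < d 0 i) -> Am W d *m Bm W d = 1%:M.
Proof.
move=> U Hd; rewrite /Bm /Am !mulmxA -(mulmxA (invmx _)) diag_inv' //.
by rewrite mulmx1 mulVmx.
Qed.

Lemma entry (M : 'M[R]_p) (r : 'rV[R]_p) a b :
  (M *m diag_mx r *m M^T) a b = \sum_j M a j * r 0 j * M b j.
Proof. by rewrite mul_mx_diag !mxE; apply: eq_bigr => j _; rewrite !mxE. Qed.

End M.
Arguments Am {R p} W d.
Arguments Bm {R p} W d.
Arguments BA {R p} W d.
Arguments AB {R p} W d.
Arguments entry {R p} M r a b.

Lemma sandw1 (R : realType) (p : nat) (B A G : 'M[R]_p) :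
  B *m A = 1%:M -> B *m (A *m G *m A^T) *m B^T = G.
Proof.
by move=> H; rewrite !mulmxA H mul1mx -mulmxA -trmx_mul H trmx1 mulmx1.
Qed.

Lemma sandw2 (R : realType) (p : nat) (B A G : 'M[R]_p) :
  B *m (A *m G *m A^T) *m B^T = (B *m A) *m G *m (B *m A)^T.
Proof. by rewrite trmx_mul !mulmxA. Qed.

Lemma covYE (R : realType) (p : nat) (W : 'M[R]_p) d g h :
  covY W d g h = Am W d *m diag_mx (\row_j g j h) *m (Am W d)^T.
Proof. by []. Qed.

Lemma Bentry (R : realType) (p : nat) (W : 'M[R]_p) d a c :
  (Bm W d) a c = (Num.sqrt (d 0 a))^-1 * ((a == c)%:R - W a c).
Proof. by rewrite /Bm mul_diag_mx !mxE. Qed.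

Theorem lemma3 (R : realType) (p : nat)
  (W0 : 'M[R]_p) (d0 : 'rV[R]_p) (g0 : 'I_p -> nat -> R) (f0 : 'I_p -> R -> R)
  (W1 : 'M[R]_p) (d1 : 'rV[R]_p) (g1 : 'I_p -> nat -> R) (f1 : 'I_p -> R -> R) :
  model_param W0 d0 g0 f0 ->
  model_param W1 d1 g1 f1 ->
  same_law_Y W0 d0 g0 W1 d1 g1 ->
  zero_diag W1 ->
  strictly_lower W0 ->
  lin_indep_on_circle f0 ->
  lin_indep_on_circle f1 ->
  W0 = W1 /\ diag_mx d0 = diag_mx d1 /\
  (forall (j : 'I_p) (w : R), - pi <= w <= pi -> f0 j w = f1 j w).
Proof.
move=> [U0 [Hd0 Hg0]] [U1 [Hd1 Hg1]] Hlaw Hz1 Hl0 Hli0 _.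
have Hcov : forall h, covY W0 d0 g0 h = covY W1 d1 g1 h.
  move=> h; have := Hlaw h.+1 ord0 ord_max.
  by rewrite /lag /= max0n min0n subn0.
pose M := Bm W1 d1 *m Am W0 d0.
have key : forall h, diag_mx (\row_j g1 j h) = M *m diag_mx (\row_j g0 j h) *m M^T.
  move=> h.
  have E1 : Bm W1 d1 *m covY W1 d1 g1 h *m (Bm W1 d1)^T = diag_mx (\row_j g1 j h).
    by rewrite covYE sandw1 // BA.
  have E0 : Bm W1 d1 *m covY W0 d0 g0 h *m (Bm W1 d1)^T = M *m diag_mx (\row_j g0 j h) *m M^T.
    by rewrite covYE /M sandw2.
  by rewrite -E1 -Hcov E0.
have Hsp0 : forall j, is_cont_specdens (g0 j) (f0 j) by move=> j; case: (Hg0 j).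
have off : forall a b j, a != b -> M a j * M b j = 0.
  move=> a b j nab.
  apply: (@gindep R p g0 f0 Hsp0 Hli0 (fun j => M a j * M b j) _ j) => h.
  have := congr1 (fun A : 'M[R]_p => A a b) (key h).
  rewrite entry !mxE (negbTE nab) mulr0n => /esym H.
  rewrite -[X in _ = X]H.
  by apply: eq_bigr => k _; rewrite !mxE mulrAC.
have MB : Bm W1 d1 = M *m Bm W0 d0 by rewrite /M -mulmxA AB // mulmx1.
clearbody M.
have B1aa : forall a, Bm W1 d1 a a = (Num.sqrt (d1 0 a))^-1.
  by move=> a; rewrite Bentry eqxx Hz1 subr0 mulr1.
have B0aa : forall a, Bm W0 d0 a a = (Num.sqrt (d0 0 a))^-1.
  by move=> a; rewrite Bentry eqxx Hl0 // subr0 mulr1.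
have B0lt : forall j a : 'I_p, (j < a)%N -> Bm W0 d0 j a = 0.
  move=> j a lt; rewrite Bentry Hl0 ?(ltnW lt) // subr0.
  have -> : (j == a) = false by apply/eqP => E; move: lt; rewrite E ltnn.
  by rewrite mulr0.
have ex : forall a : 'I_p, exists2 j : 'I_p, (a <= j)%N & M a j != 0.
  move=> a.
  have : Bm W1 d1 a a != 0 by rewrite B1aa invr_eq0 gt_eqF // sqrtr_gt0.
  rewrite MB mxE; apply: contraNP => Hn; apply/eqP; apply: big1 => j _.
  case: (leqP a j) => [le|lt].
    case: (eqVneq (M a j) 0) => [->|nz]; first by rewrite mul0r.
    by exfalso; apply: Hn; exists j.
  by rewrite B0lt // mulr0.
have Mdiag_nz : forall a : 'I_p, M a a != 0.
  suff H : forall n (a : 'I_p), (p <= a + n)%N -> M a a != 0.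
    by move=> a; apply: (H p); rewrite leq_addl.
  elim=> [|n IH] a Ha; first by move: Ha; rewrite addn0 leqNgt ltn_ord.
  have [j Hj Hn] := ex a.
  case: (eqVneq j a) => [E|nja]; first by move: Hn; rewrite E.
  have ltaj : (a < j)%N.
    rewrite ltn_neqAle Hj andbT; apply/eqP => E; move/eqP: nja; apply.
    by apply: val_inj; exact: esym E.
  have Mjj : M j j != 0.
    by apply: IH; apply: leq_trans Ha _; rewrite addnS -addSn leq_add2r.
  have naj : a != j by rewrite eq_sym.
  move/eqP: (off a j j naj).
  by rewrite mulf_eq0 (negbTE Hn) (negbTE Mjj).
have Moff : forall a b, a != b -> M a b = 0.
  move=> a b nab; have /eqP := off a b b nab.
  by rewrite mulf_eq0 (negbTE (Mdiag_nz b)) orbF => /eqP.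
have gM : forall a h, g1 a h = M a a ^+ 2 * g0 a h.
  move=> a h; have := congr1 (fun A : 'M[R]_p => A a a) (key h).
  rewrite entry !mxE eqxx mulr1n (bigD1 a) //= big1 ?addr0; last first.
    by move=> j nja; rewrite Moff ?mul0r // eq_sym.
  by move=> ->; rewrite mxE expr2 mulrAC.
have M2 : forall a, M a a ^+ 2 = 1.
  move=> a; have := gM a 0%N.
  by case: (Hg0 a) => [[-> _] _]; case: (Hg1 a) => [[-> _] _]; rewrite mulr1.
have Mpos : forall a, 0 < M a a.
  move=> a; have := congr1 (fun A : 'M[R]_p => A a a) MB.
  rewrite /= B1aa mxE (bigD1 a) //= big1 ?addr0; last first.
    by move=> j nja; rewrite Moff ?mul0r // eq_sym.
  rewrite B0aa => E.
  have : 0 < M a a * (Num.sqrt (d0 0 a))^-1 by rewrite -E invr_gt0 sqrtr_gt0.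
  by rewrite pmulr_lgt0 // invr_gt0 sqrtr_gt0.
have M1 : forall a, M a a = 1.
  move=> a; have /eqP := M2 a; rewrite sqrf_eq1 => /orP[/eqP //|/eqP E].
  by move: (Mpos a); rewrite E oppr_gt0 ltr10.
have Mid : M = 1%:M.
  apply/matrixP => a b; rewrite mxE; case: (eqVneq a b) => [->|nab].
    by rewrite M1.
  by rewrite Moff.
have BB : Bm W1 d1 = Bm W0 d0 by rewrite MB Mid mul1mx.
have dd : forall a, d0 0 a = d1 0 a.
  move=> a; have := congr1 (fun A : 'M[R]_p => A a a) BB.
  rewrite /= B1aa B0aa => /invr_inj E.
  by rewrite -(sqr_sqrtr (ltW (Hd0 a))) -(sqr_sqrtr (ltW (Hd1 a))) E.
have d01 : d0 = d1 by apply/matrixP => i a; rewrite (ord1 i) dd.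
split.
  apply/matrixP => a c; have := congr1 (fun A : 'M[R]_p => A a c) BB.
  rewrite /= !Bentry d01.
  have nz : (Num.sqrt (d1 0 a))^-1 != 0 by rewrite invr_eq0 gt_eqF // sqrtr_gt0.
  by move=> /(mulfI nz) /addrI /oppr_inj.
split; first by rewrite d01.
move=> j w Hw.
have gg : g0 j = g1 j by apply: funext => h; rewrite gM M1 expr1n mul1r.
case: (Hg0 j) => _ [/(_ w Hw) C0 _]; case: (Hg1 j) => _ [/(_ w Hw) C1 _].
rewrite gg in C0; have := cvg_unique _ C0 C1; by apply.
Qed.
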